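(* Let $k$ be algebraically closed of characteristic $0$ and $n,m\ge0$. Let $\mathfrak M_{n,m}$ be the set of $n\times m$ matrices over $\mathbf F$, and consider $k[\mathfrak M_{n,m}]$ (the vector space with basis $[X]$, $X\in\mathfrak M_{n,m}$) with the left $k[\mathfrak M_n]$-action $[a][X]=[aX]$ and the commuting right $k[\mathfrak M_m]$-action $[X][b]=[Xb]$. Then the images of $k[\mathfrak M_n]$ and of $k[\mathfrak M_m]$ in $\operatorname{End}_k(k[\mathfrak M_{n,m}])$ are each other's centralizers.
   Context: $\mathbf F$ is a finite field with $q$ elements and $\mathfrak M_n$ denotes the monoid of $n\times n$ matrices over $\mathbf F$ with monoid algebra $k[\mathfrak M_n]$. Note $k[\mathfrak M_{n,m}]\cong V^{\otimes m}$ for $V=k[\mathbf F^n]$. *)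

(* Defs.v *)
From HB Require Import structures.
From mathcomp Require Import all_boot all_order all_algebra all_field.
Set Implicit Arguments. Unset Strict Implicit. Unset Printing Implicit Defensive.
Import GRing.Theory.
Local Open Scope ring_scope.

(* The monoid algebra k[S] of a finite set S is represented as functions
   S -> k (an element sum_s c_s [s] is the function s |-> c_s).
   V := k[M_{n,m}] = {ffun 'M[F]_(n,m) -> k}. *)

Definition lact (F : finFieldType) (k : fieldType) (n m : nat)
  (f : {ffun 'M[F]_n -> k}) (v : {ffun 'M[F]_(n,m) -> k^o}) : {ffun 'M[F]_(n,m) -> k^o} :=
  [ffun Y => \sum_(a : 'M[F]_n) \sum_(X : 'M[F]_(n,m) | a *m X == Y) f a * v X].

Definition ract (F : finFieldType) (k : fieldType) (n m : nat)
  (v : {ffun 'M[F]_(n,m) -> k^o}) (g : {ffun 'M[F]_m -> k}) : {ffun 'M[F]_(n,m) -> k^o} :=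
  [ffun Y => \sum_(X : 'M[F]_(n,m)) \sum_(b : 'M[F]_m | X *m b == Y) v X * g b].

(* Main.v *)
Require Import Defs.
From HB Require Import structures.
From mathcomp Require Import all_boot all_order all_algebra all_field.
Import GRing.Theory.
Local Open Scope ring_scope.
Set Implicit Arguments. Unset Strict Implicit. Unset Printing Implicit Defensive.
Lemma prim_exists (k : closedFieldType) (p : nat) :
  [pchar k] =i pred0 -> prime p -> exists z : k, p.-primitive_root z.
Proof.
move=> ch pr.
have p_gt1 := prime_gt1 pr.
set P := \poly_(i < p) (1 : k).
have szP : size P = p.
  by rewrite size_poly_eq // oner_neq0.
have /closed_rootP [z rz] : size P != 1%N by rewrite szP; case: p p_gt1 {pr P szP} => [|[]].
have sum0 : \sum_(i < p) z ^+ i = 0.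
  by move: rz; rewrite /root horner_poly; under eq_bigr do rewrite mul1r; move/eqP.
have zp : z ^+ p = 1 by apply/eqP; rewrite -subr_eq0 subrX1 sum0 mulr0.
have z1 : z != 1.
  apply/negP => /eqP z1; move: sum0; rewrite z1.
  under eq_bigr do rewrite expr1n.
  rewrite sumr_const card_ord => /eqP.
  by move/(pcharf0P k): ch => ->; clear rz szP; case: p p_gt1 {pr P zp}.
have [d dz] := prim_order_exists (prime_gt0 pr) zp.
move=> /(prime_nt_dvdP pr) dp.
exists z; case: (d =P 1%N) dp => [d1 _ | _ dp]; last by rewrite -dp.
by move: (prim_expr_order dz); rewrite d1 expr1 => /eqP; rewrite (negbTE z1).
Qed.
Lemma char_exists (F : finFieldType) (k : closedFieldType) :
  [pchar k] =i pred0 ->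
  exists psi : F -> k, (forall x y, psi (x + y) = psi x * psi y) /\ psi 0 = 1
     /\ exists x0, psi x0 != 1.
Proof.
move=> ch.
have [p pr chF] := finPcharP F.
have [z pz] := prim_exists ch pr.
have [f lin_f [g fK gK]] := pprimeChar_vectAxiom chF.
have fD : forall x y, f (x + y) = f x + f y.
  by move=> x y; rewrite -[x in LHS]scale1r lin_f scale1r.
have f0 : f 0 = 0.
  by apply: (addrI (f 0)); rewrite [RHS]addr0 -fD addr0.
have f1 : f 1 != 0.
  apply/negP => /eqP e; have : g (f 1) = g (f 0) by rewrite e f0.
  by rewrite !fK => /eqP; rewrite oner_eq0.
have [i fi] : exists i, f 1 0 i != 0.
  apply/existsP; apply: contraR f1 => /existsPn H; apply/eqP/matrixP => a b.
  by rewrite ord1 mxE; apply/eqP/negPn/H.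
pose psi (x : F) := z ^+ (val (f x 0 i)).
exists psi; split; last split.
- have e : forall a : nat, z ^+ (a %% (Zp_trunc (pdiv p)).+2) = z ^+ a.
    by move=> a; rewrite Fp_cast // expr_mod //; apply: prim_expr_order pz.
  by move=> x y; rewrite /psi -exprD fD mxE /= e.
- by rewrite /psi f0 mxE.
- exists 1; rewrite /psi -[X in _ != X](expr0 z) (eq_prim_root_expr pz) mod0n.
  rewrite modn_small; first by move: fi; apply: contra => /eqP e; apply/eqP/val_inj.
  by have := ltn_ord (f 1 0 i); rewrite [X in (_ < X)%N -> _]Fp_cast.
Qed.
Section Coend.
Variables (F : fieldType) (R : Type) (p q : nat) (Om : 'M[F]_(p,q) -> 'M[F]_(p,q) -> R).
Hypothesis OmM : forall X eta (b : 'M[F]_q), Om (X *m b) eta = Om X (eta *m b^T).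

Lemma coend_same X eta eta' : eta *m X^T = eta' *m X^T -> Om X eta = Om X eta'.
Proof.
move=> e; pose b := pinvmx X *m X.
have Xb : X *m b = X by rewrite /b mulmxA mulmxKpV.
have -> : Om X eta = Om (X *m b) eta by rewrite Xb.
have -> : Om X eta' = Om (X *m b) eta' by rewrite Xb.
by rewrite !OmM /b trmx_mul !mulmxA e.
Qed.

Lemma coend_move X0 eta0 X eta : eta0 *m X0^T = eta *m X^T -> (X0^T <= X^T)%MS ->
  Om X0 eta0 = Om X eta.
Proof.
move=> e s; pose b := (X0^T *m pinvmx X^T)^T.
have Xb : X *m b = X0.
  by apply: trmx_inj; rewrite trmx_mul /b trmxK; exact: mulmxKpV.
rewrite -Xb OmM; apply: coend_same.
by rewrite -mulmxA -trmx_mul Xb.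
Qed.

Lemma coend X eta X' eta' : eta *m X^T = eta' *m X'^T -> Om X eta = Om X' eta'.
Proof.
move=> e; pose X0 := (pinvmx eta *m (eta *m X^T))^T.
have e0 : eta *m X0^T = eta *m X^T.
  by rewrite /X0 trmxK mulmxA (mulmxA (eta *m pinvmx eta)) (mulmxKpV (submx_refl eta)).
have s1 : (X0^T <= X^T)%MS by rewrite /X0 trmxK mulmxA submxMl.
have s2 : (X0^T <= X'^T)%MS by rewrite /X0 trmxK e mulmxA submxMl.
rewrite -(coend_move e0 s1); apply: coend_move s2; by rewrite e0.
Qed.
End Coend.
Section T.
Variables (F : finFieldType) (k : fieldType) (n m : nat).
Local Notation V := {ffun 'M[F]_(n,m) -> k^o}.

Definition dlt (R : nzRingType) (T : finType) (X : T) : {ffun T -> R} := [ffun Y => (Y == X)%:R].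

Lemma sum_pick (T : finType) (R : nzSemiRingType) (u : T) (h : T -> R) :
  \sum_Y (u == Y)%:R * h Y = h u.
Proof.
rewrite (bigD1 u) //= eqxx mul1r big1 ?addr0 // => Y nY.
by rewrite eq_sym (negbTE nY) mul0r.
Qed.

Lemma push (R : comNzRingType) (T U : finType) (u : T -> R) (h : T -> U) (d : U -> R) :
  \sum_Y (\sum_Z u Z * (h Z == Y)%:R) * d Y = \sum_Z u Z * d (h Z).
Proof.
under eq_bigr do rewrite mulr_suml.
rewrite exchange_big /=; apply: eq_bigr => Z _.
under eq_bigr do rewrite -mulrA.
by rewrite -mulr_sumr sum_pick.
Qed.

Lemma lactE (f : {ffun 'M[F]_n -> k}) (v : V) Y : lact f v Y = \sum_a \sum_X f a * v X * (a *m X == Y)%:R.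
Proof.
rewrite ffunE; apply: eq_bigr => a _; rewrite big_mkcond; apply: eq_bigr => X _.
by case: eqP => _; rewrite ?mulr1 ?mulr0.
Qed.

Lemma ractE (v : V) (g : {ffun 'M[F]_m -> k}) Y : ract v g Y = \sum_X \sum_b v X * g b * (X *m b == Y)%:R.
Proof.
rewrite ffunE; apply: eq_bigr => X _; rewrite big_mkcond; apply: eq_bigr => b _.
by case: eqP => _; rewrite ?mulr1 ?mulr0.
Qed.


Lemma lact_dlt (f : {ffun 'M[F]_n -> k}) (X Y : 'M[F]_(n,m)) : lact f (dlt (k^o) X) Y = \sum_a f a * (a *m X == Y)%:R.
Proof.
rewrite lactE; apply: eq_bigr => a _.
rewrite (bigD1 X) //= big1 ?addr0 => [|X' nX]; last by rewrite ffunE (negbTE nX) mulr0 mul0r.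
by rewrite ffunE eqxx mulr1.
Qed.

Lemma lact_dlt_l (a : 'M[F]_n) (v : V) Y : lact (dlt k a) v Y = \sum_X v X * (a *m X == Y)%:R.
Proof.
rewrite lactE (bigD1 a) //= [X in _ + X]big1 ?addr0 => [|a' na]; last first.
  by rewrite big1 // => X _; rewrite ffunE (negbTE na) !mul0r.
by apply: eq_bigr => X _; rewrite ffunE eqxx mul1r.
Qed.

Lemma ract_dlt_r (v : V) (b : 'M[F]_m) Y : ract v (dlt k b) Y = \sum_X v X * (X *m b == Y)%:R.
Proof.
rewrite ractE; apply: eq_bigr => X _.
rewrite (bigD1 b) //= big1 ?addr0 => [|b' nb]; last by rewrite ffunE (negbTE nb) mulr0 mul0r.
by rewrite ffunE eqxx mulr1.
Qed.

Lemma ract_dlt_l (X Y : 'M[F]_(n,m)) (g : {ffun 'M[F]_m -> k}) : ract (dlt (k^o) X) g Y = \sum_b g b * (X *m b == Y)%:R.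
Proof.
rewrite ractE (bigD1 X) //= [X in _ + X]big1 ?addr0 => [|X' nX]; last first.
  by rewrite big1 // => b _; rewrite ffunE (negbTE nX) !mul0r.
by apply: eq_bigr => b _; rewrite ffunE eqxx mul1r.
Qed.

Lemma scaleo (a : k) (b : k^o) : a *: b = a * b.
Proof. by []. Qed.

Lemma vec_exp (v : V) : v = \sum_X v X *: dlt (k^o) X.
Proof.
apply/ffunP => Y; rewrite sum_ffunE.
under eq_bigr do rewrite ffunE.
rewrite (bigD1 Y) //= big1 ?addr0 => [|X nX]; last by rewrite ffunE eq_sym (negbTE nX) scaler0.
rewrite ffunE eqxx; by rewrite [RHS]mulr1.
Qed.

Lemma lin_exp (T : {linear V -> V}) v : T v = \sum_X v X *: T (dlt (k^o) X).
Proof. by rewrite {1}(vec_exp v) linear_sum; apply: eq_bigr => X _; rewrite linearZ. Qed.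

Lemma lact_exp (f : {ffun 'M[F]_n -> k}) (v : V) : lact f v = \sum_X v X *: lact f (dlt (k^o) X).
Proof.
apply/ffunP => Y; rewrite sum_ffunE lactE.
under [RHS]eq_bigr do rewrite ffunE lact_dlt scaleo mulr_sumr.
rewrite exchange_big /=; apply: eq_bigr => X _; apply: eq_bigr => a _.
by rewrite mulrA [v X * _]mulrC.
Qed.

Lemma ract_exp (v : V) (g : {ffun 'M[F]_m -> k}) : ract v g = \sum_X v X *: ract (dlt (k^o) X) g.
Proof.
apply/ffunP => Y; rewrite sum_ffunE ractE.
apply: eq_bigr => X _; rewrite ffunE ract_dlt_l scaleo mulr_sumr.
by apply: eq_bigr => b _; rewrite mulrA.
Qed.


Lemma push2 (R : comNzRingType) (T1 T2 U : finType) (u : T1 -> T2 -> R) (h : T1 -> T2 -> U)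
  (d : U -> R) :
  \sum_Y (\sum_Z1 \sum_Z2 u Z1 Z2 * (h Z1 Z2 == Y)%:R) * d Y
  = \sum_Z1 \sum_Z2 u Z1 Z2 * d (h Z1 Z2).
Proof.
under eq_bigr do rewrite mulr_suml.
rewrite exchange_big /=; apply: eq_bigr => Z1 _.
exact: push.
Qed.

Lemma assoc (f : {ffun 'M[F]_n -> k}) (v : V) (g : {ffun 'M[F]_m -> k}) :
  lact f (ract v g) = ract (lact f v) g.
Proof.
apply/ffunP => Y; rewrite lactE ractE.
under eq_bigr => a _.
  under eq_bigr do rewrite ractE mulrAC mulrC.
  rewrite (push2 (fun X' b => v X' * g b) (fun X' b => X' *m b) (fun X => f a * (a *m X == Y)%:R)).
  over.
rewrite [RHS]exchange_big /=.
under [RHS]eq_bigr => b _.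
  under eq_bigr do rewrite lactE -mulrA.
  rewrite (push2 (fun a X' => f a * v X') (fun a X' => a *m X') (fun X => g b * (X *m b == Y)%:R)).
  over.
rewrite [RHS]exchange_big /=; apply: eq_bigr => a _.
rewrite [RHS]exchange_big /=; apply: eq_bigr => X _; apply: eq_bigr => b _.
by rewrite mulmxA; rewrite !mulrA; congr (_ * _); rewrite mulrC mulrA [f a * _]mulrC.
Qed.

End T.
Section Fourier.
Variables (F : finFieldType) (k : fieldType) (psi : F -> k).
Hypothesis psiD : forall x y, psi (x + y) = psi x * psi y.
Hypothesis psi0 : psi 0 = 1.
Variable x0 : F.
Hypothesis psix0 : psi x0 != 1.
Hypothesis ch : [pchar k] =i pred0.

Definition pr p q (X Z : 'M[F]_(p,q)) : F := \tr (X *m Z^T).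

Lemma prC p q (X Z : 'M[F]_(p,q)) : pr X Z = pr Z X.
Proof. by rewrite /pr -mxtrace_tr trmx_mul trmxK. Qed.

Lemma prDl p q (X Y Z : 'M[F]_(p,q)) : pr (X + Y) Z = pr X Z + pr Y Z.
Proof. by rewrite /pr mulmxDl mxtraceD. Qed.

Lemma prBr p q (X Y Z : 'M[F]_(p,q)) : pr X (Y - Z) = pr X Y - pr X Z.
Proof. by rewrite /pr linearB /= mulmxBr raddfB. Qed.

Lemma prZl p q c (X Z : 'M[F]_(p,q)) : pr (c *: X) Z = c * pr X Z.
Proof. by rewrite /pr -scalemxAl mxtraceZ. Qed.

Lemma pr0r p q (X : 'M[F]_(p,q)) : pr X 0 = 0.
Proof. by rewrite /pr trmx0 mulmx0 mxtrace0. Qed.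

Lemma prMl p q (a : 'M[F]_p) (X Z : 'M[F]_(p,q)) : pr (a *m X) Z = pr a (Z *m X^T).
Proof. by rewrite /pr trmx_mul trmxK mulmxA. Qed.

Lemma prMr p q (X Z : 'M[F]_(p,q)) (b : 'M[F]_q) : pr (X *m b) Z = pr X (Z *m b^T).
Proof. by rewrite /pr trmx_mul trmxK mulmxA. Qed.

Lemma prMl' p q (a : 'M[F]_p) (X Z : 'M[F]_(p,q)) : pr (a *m X) Z = pr X (a^T *m Z).
Proof. by rewrite /pr trmx_mul trmxK -mulmxA mxtrace_mulC mulmxA. Qed.

Lemma prMr' p q (X Z : 'M[F]_(p,q)) (b : 'M[F]_q) : pr (X *m b) Z = pr b (X^T *m Z).
Proof. by rewrite /pr trmx_mul trmxK -mulmxA mxtrace_mulC mulmxA. Qed.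

Lemma pr_delta p q (i : 'I_p) (j : 'I_q) (Z : 'M[F]_(p,q)) : pr (delta_mx i j) Z = Z i j.
Proof.
rewrite /pr /mxtrace (bigD1 i) //= big1 ?addr0 => [|l nl].
  rewrite mxE (bigD1 j) //= big1 ?addr0 => [|t nt]; first by rewrite !mxE !eqxx mul1r.
  by rewrite !mxE eqxx (negbTE nt) mul0r.
by rewrite mxE big1 // => t _; rewrite !mxE (negbTE nl) mul0r.
Qed.

Let Nc p q := #|{: 'M[F]_(p,q)}|.

Lemma Nc_neq0 p q : (Nc p q)%:R != 0 :> k.
Proof.
move/(pcharf0P k): ch => ->; rewrite -lt0n /Nc; apply/card_gt0P; by exists 0.
Qed.

Lemma orth p q (Z : 'M[F]_(p,q)) :
  \sum_X psi (pr X Z) = if Z == 0 then (Nc p q)%:R else 0.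
Proof.
case: eqP => [-> | /eqP nz].
  under eq_bigr do rewrite pr0r psi0.
  by rewrite sumr_const.
have /existsP [i /existsP [j zij]] : [exists i, [exists j, Z i j != 0]].
  apply: contraR nz => /existsPn H; apply/eqP/matrixP => a b.
  rewrite mxE; apply/eqP; move: (H a); apply: contraR => hb.
  by apply/existsP; exists b.
set S := \sum_X _.
pose X1 := (x0 / Z i j) *: delta_mx i j.
have e : S = psi x0 * S.
  rewrite {1}/S (reindex_inj (addrI X1)) /= mulr_sumr; apply: eq_bigr => X _.
  by rewrite prDl psiD prZl pr_delta divfK.
have : (1 - psi x0) * S = 0 by rewrite mulrBl mul1r -e subrr.
by move/eqP; rewrite mulf_eq0 subr_eq0 eq_sym (negbTE psix0) => /eqP.
Qed.

Lemma kern p q (A B : 'M[F]_(p,q)) :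
  \sum_X psi (pr X A) * psi (- pr X B) = if A == B then (Nc p q)%:R else 0.
Proof.
under eq_bigr do rewrite -psiD -prBr.
by rewrite orth subr_eq0.
Qed.

Definition finv p q (g : 'M[F]_(p,q) -> k) : {ffun 'M[F]_(p,q) -> k} :=
  [ffun a => ((Nc p q)%:R)^-1 * \sum_xi g xi * psi (- pr a xi)].

Lemma finvK p q (g : 'M[F]_(p,q) -> k) zeta :
  \sum_a finv g a * psi (pr a zeta) = g zeta.
Proof.
under eq_bigr do rewrite ffunE -mulrA mulr_suml.
rewrite -mulr_sumr exchange_big /=.
under eq_bigr => xi _.
  under eq_bigr do rewrite -mulrA [psi (- _) * _]mulrC.
  rewrite -mulr_sumr kern.
  over.
rewrite (bigD1 zeta) //= eqxx big1 ?addr0 => [|xi nxi]; last by rewrite eq_sym (negbTE nxi) mulr0.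
by rewrite mulrC -mulrA mulfV ?mulr1 ?Nc_neq0.
Qed.

Lemma fourier_inj p q (v w : 'M[F]_(p,q) -> k) :
  (forall eta, \sum_Y v Y * psi (pr Y eta) = \sum_Y w Y * psi (pr Y eta)) ->
  forall Y, v Y = w Y.
Proof.
have rec : forall (u : 'M[F]_(p,q) -> k) Y0,
    \sum_eta (\sum_Y u Y * psi (pr Y eta)) * psi (- pr Y0 eta) = (Nc p q)%:R * u Y0.
  move=> u Y0; under eq_bigr do rewrite mulr_suml.
  rewrite exchange_big /=.
  under eq_bigr => Y _.
    under eq_bigr do rewrite -mulrA (prC Y) (prC Y0).
    rewrite -mulr_sumr kern.
    over.
  rewrite (bigD1 Y0) //= eqxx big1 ?addr0 => [|Y nY]; last by rewrite (negbTE nY) mulr0.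
  by rewrite mulrC.
move=> H Y; apply: (mulfI (Nc_neq0 p q)); rewrite -!rec.
by apply: eq_bigr => eta _; rewrite H.
Qed.


Variables (n m : nat).
Local Notation V := {ffun 'M[F]_(n,m) -> k^o}.

Lemma part1 (T : {linear V -> V}) :
  (forall g v, T (ract v g) = ract (T v) g) -> exists f, forall v, T v = lact f v.
Proof.
move=> H.
pose Om (X eta : 'M[F]_(n,m)) := \sum_Y T (dlt (k^o) X) Y * psi (pr Y eta).
have OmM : forall X eta b, Om (X *m b) eta = Om X (eta *m b^T).
  move=> X eta b; rewrite /Om.
  have -> : dlt (k^o) (X *m b) = ract (dlt (k^o) X) (dlt k b).
    apply/ffunP => Y; rewrite ract_dlt_l (bigD1 b) //= [X in _ + X]big1 ?addr0 => [|b' nb];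
      last by rewrite ffunE (negbTE nb) mul0r.
    by rewrite !ffunE eqxx mul1r eq_sym.
  rewrite H.
  under eq_bigr do rewrite ract_dlt_r.
  rewrite (push (T (dlt (k^o) X)) (fun X' => X' *m b) (fun Y => psi (pr Y eta))).
  by apply: eq_bigr => X' _; rewrite prMr.
have Omc := coend OmM.
pose g0 (xi : 'M[F]_n) := if [pick pq : 'M[F]_(n,m) * 'M[F]_(n,m) | pq.2 *m pq.1^T == xi]
  is Some pq then Om pq.1 pq.2 else 0.
have gE : forall X eta, g0 (eta *m X^T) = Om X eta.
  move=> X eta; rewrite /g0; case: pickP => [pq /eqP e | /(_ (X, eta))]; last by rewrite eqxx.
  exact: Omc.
exists (finv g0).
have TX : forall X, T (dlt (k^o) X) = lact (finv g0) (dlt (k^o) X).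
  move=> X; apply/ffunP; apply: fourier_inj => eta.
  under [RHS]eq_bigr do rewrite lact_dlt.
  rewrite (push (finv g0) (fun a => a *m X) (fun Y => psi (pr Y eta))).
  under [RHS]eq_bigr do rewrite prMl.
  by rewrite finvK gE.
by move=> v; rewrite lin_exp lact_exp; apply: eq_bigr => X _; rewrite TX.
Qed.

Lemma part2 (T : {linear V -> V}) :
  (forall f v, T (lact f v) = lact f (T v)) -> exists g, forall v, T v = ract v g.
Proof.
move=> H.
pose Om (X eta : 'M[F]_(n,m)) := \sum_Y T (dlt (k^o) X) Y * psi (pr Y eta).
have OmM : forall X eta a, Om (a *m X) eta = Om X (a^T *m eta).
  move=> X eta a; rewrite /Om.
  have -> : dlt (k^o) (a *m X) = lact (dlt k a) (dlt (k^o) X).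
    apply/ffunP => Y; rewrite lact_dlt (bigD1 a) //= [X in _ + X]big1 ?addr0 => [|a' na];
      last by rewrite ffunE (negbTE na) mul0r.
    by rewrite !ffunE eqxx mul1r eq_sym.
  rewrite H.
  under eq_bigr do rewrite lact_dlt_l.
  rewrite (push (T (dlt (k^o) X)) (fun X' => a *m X') (fun Y => psi (pr Y eta))).
  by apply: eq_bigr => X' _; rewrite prMl'.
pose Om2 (X eta : 'M[F]_(m,n)) := Om X^T eta^T.
have Om2M : forall X eta b, Om2 (X *m b) eta = Om2 X (eta *m b^T).
  by move=> X eta b; rewrite /Om2 !trmx_mul OmM trmxK.
have Omc : forall X eta X' eta', X^T *m eta = X'^T *m eta' -> Om X eta = Om X' eta'.
  move=> X eta X' eta' e.
  have -> : Om X eta = Om2 X^T eta^T by rewrite /Om2 !trmxK.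
  have -> : Om X' eta' = Om2 X'^T eta'^T by rewrite /Om2 !trmxK.
  apply: (coend Om2M); rewrite !trmxK; move/(congr1 trmx): e; by rewrite !trmx_mul !trmxK.
pose g0 (xi : 'M[F]_m) := if [pick pq : 'M[F]_(n,m) * 'M[F]_(n,m) | pq.1^T *m pq.2 == xi]
  is Some pq then Om pq.1 pq.2 else 0.
have gE : forall X eta, g0 (X^T *m eta) = Om X eta.
  move=> X eta; rewrite /g0; case: pickP => [pq /eqP e | /(_ (X, eta))]; last by rewrite eqxx.
  exact: Omc.
exists (finv g0).
have TX : forall X, T (dlt (k^o) X) = ract (dlt (k^o) X) (finv g0).
  move=> X; apply/ffunP; apply: fourier_inj => eta.
  under [RHS]eq_bigr do rewrite ract_dlt_l.
  rewrite (push (finv g0) (fun b => X *m b) (fun Y => psi (pr Y eta))).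
  under [RHS]eq_bigr do rewrite prMr'.
  by rewrite finvK gE.
by move=> v; rewrite lin_exp ract_exp; apply: eq_bigr => X _; rewrite TX.
Qed.

End Fourier.

Unset Implicit Arguments.
Theorem theorem6p1 (F : finFieldType) (k : closedFieldType)
  (char0 : [pchar k] =i pred0) (n m : nat) :
  (forall T : {linear {ffun 'M[F]_(n,m) -> k^o} -> {ffun 'M[F]_(n,m) -> k^o}},
     (exists f : {ffun 'M[F]_n -> k}, forall v, T v = lact f v) <->
     (forall (g : {ffun 'M[F]_m -> k}) v, T (ract v g) = ract (T v) g)) /\
  (forall T : {linear {ffun 'M[F]_(n,m) -> k^o} -> {ffun 'M[F]_(n,m) -> k^o}},
     (exists g : {ffun 'M[F]_m -> k}, forall v, T v = ract v g) <->
     (forall (f : {ffun 'M[F]_n -> k}) v, T (lact f v) = lact f (T v))).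
Proof.
have [psi [psiD [psi0 [x0 psix0]]]] := char_exists F char0.
split=> T; split.
- by move=> [f Tf] g v; rewrite !Tf assoc.
- move=> H; apply: (part1 psiD psi0 psix0 char0 H).
- by move=> [g Tg] f v; rewrite !Tg assoc.
- move=> H; apply: (part2 psiD psi0 psix0 char0 H).
Qed.
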